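(* Let $(M,\cdot,1)$ be a monoid, $\Sigma$ a finite alphabet, and $\ell:\Sigma^*\to M$ an $M$-language. If there exists a factorization $(g,f)$ on $L$ such that the right congruence $\equiv^{(g,f)}_\ell$ on $\Sigma^*$ has finite index, then $\ell$ is a recognizable $M$-language.
   Context: $L$ is the set of all functions $\Sigma^*\to M$; $\varepsilon$ is the empty word. A factorization on $L$ is a pair $(g,f)$ of functions $g:L\to M$, $f:L\to L$ with $g(\ell)\cdot f(\ell)=\ell$ for all $\ell\in L$, where $(m\cdot\ell)(\gamma)=m\cdot\ell(\gamma)$. For a word $\alpha$, $\Delta_\alpha:L\to L$ is $\Delta_\alpha(\ell)(\gamma)=\ell(\alpha\gamma)$. Define $S^{(g,f)}_\varepsilon$ as the identity on $L$ and $S^{(g,f)}_{\alpha\sigma}=f\circ\Delta_\sigma\circ S^{(g,f)}_\alpha$ for $\sigma\in\Sigma$. The relation $\equiv^{(g,f)}_\ell$ is defined by $\alpha\equiv^{(g,f)}_\ell\beta\iff S^{(g,f)}_\alpha(\ell)=S^{(g,f)}_\beta(\ell)$; finite index means finitely many classes. An $M$-DFA is a tuple $(Q,\Sigma,u,i_u,\delta,w,\rho)$ with $Q$ finite nonempty, initial state $u$, initial value $i_u\in M$, $\delta:Q\times\Sigma\to Q$, $w:Q\times\Sigma\to M$, $\rho:Q\to M$; with $q\alpha$ the extended transition and $w^*(q,\varepsilon)=1$, $w^*(q,\alpha\sigma)=w^*(q,\alpha)\cdot w(q\alpha,\sigma)$, it recognizes $\alpha\mapsto i_u\cdot w^*(u,\alpha)\cdot\rho(u\alpha)$.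 Recognizable means recognized by some $M$-DFA. *)

(* Defs.v *)
From mathcomp Require Import all_boot.
Set Implicit Arguments. Unset Strict Implicit. Unset Printing Implicit Defensive.

Record is_monoid (M : Type) (op : M -> M -> M) (one : M) : Prop := {
  monoid_assoc : forall a b c, op a (op b c) = op (op a b) c;
  monoid_left_id : forall a, op one a = a;
  monoid_right_id : forall a, op a one = a }.

Section MLang.
Variables (Sigma : finType) (M : Type) (op : M -> M -> M) (one : M).

(* L = all functions Sigma^* -> M; words are seq Sigma, epsilon = [::]. *)
Definition lang := seq Sigma -> M.

Definition lscale (m : M) (l : lang) : lang := fun gamma => op m (l gamma).

Definition is_factorization (g : lang -> M) (f : lang -> lang) : Prop :=
  forall l : lang, lscale (g l) (f l) = l.

Definition Delta (alpha : seq Sigma) (l : lang) : lang :=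
  fun gamma => l (alpha ++ gamma).

(* S_eps = id, S_{alpha sigma} = f o Delta_sigma o S_alpha *)
Fixpoint S_rev (f : lang -> lang) (ra : seq Sigma) : lang -> lang :=
  match ra with
  | [::] => id
  | s :: ra' => fun l => f (Delta [:: s] (S_rev f ra' l))
  end.
Definition S_fac (f : lang -> lang) (alpha : seq Sigma) : lang -> lang :=
  S_rev f (rev alpha).

Definition fac_equiv (f : lang -> lang) (l : lang) (a b : seq Sigma) : Prop :=
  S_fac f a l = S_fac f b l.

Definition finite_index (R : seq Sigma -> seq Sigma -> Prop) : Prop :=
  exists reps : seq (seq Sigma), forall a, exists2 r, r \in reps & R a r.

Record MDFA := {
  Q : finType;
  q0 : Q;
  init_val : M;
  delta : Q -> Sigma -> Q;
  wt : Q -> Sigma -> M;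
  rho : Q -> M }.

Fixpoint ext_delta {A : MDFA} (q : Q A) (alpha : seq Sigma) : Q A :=
  match alpha with
  | [::] => q
  | s :: a => ext_delta (delta q s) a
  end.

(* w^*(q, eps) = 1, w^*(q, alpha sigma) = w^*(q,alpha) . w(q alpha, sigma),
   literally, by recursion on the reversed word. *)
Fixpoint wstar_rev {A : MDFA} (q : Q A) (ra : seq Sigma) : M :=
  match ra with
  | [::] => one
  | s :: ra' => op (wstar_rev q ra') (wt (ext_delta q (rev ra')) s)
  end.
Definition wstar {A : MDFA} (q : Q A) (alpha : seq Sigma) : M :=
  wstar_rev q (rev alpha).

Definition mdfa_lang (A : MDFA) : lang :=
  fun alpha => op (op (init_val A) (wstar (q0 A) alpha))
                  (rho (ext_delta (q0 A) alpha)).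

Definition recognizable (l : lang) : Prop := exists A : MDFA, mdfa_lang A = l.

End MLang.

(* Main.v *)
From Stdlib Require Import ClassicalEpsilon FunctionalExtensionality.
Require Import Defs.
From mathcomp Require Import all_boot.

Lemma ext_delta_rcons (Sigma : finType) (M : Type) (A : MDFA Sigma M) q a s :
  ext_delta q (rcons a s) = @delta Sigma M A (ext_delta q a) s.
Proof. by elim: a q => [|x a IH] q //=. Qed.

Lemma S_fac_rcons (Sigma : finType) (M : Type) (f : lang Sigma M -> lang Sigma M) a s l :
  S_fac f (rcons a s) l = f (Delta [:: s] (S_fac f a l)).
Proof. by rewrite /S_fac rev_rcons. Qed.

Theorem corollary1 (M : Type) (op : M -> M -> M) (one : M)
  (Hmon : is_monoid op one) (Sigma : finType) (l : lang Sigma M) :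
  (exists (g : lang Sigma M -> M) (f : lang Sigma M -> lang Sigma M),
      is_factorization op g f /\ finite_index (fac_equiv f l)) ->
  recognizable op one l.
Proof.
  move=> [g [f [Hfac [reps Hreps]]]].
  pose n := size reps.
  pose L (i : 'I_n) := S_fac f (nth [::] reps i) l.
  have Hex : forall a, exists i : 'I_n, S_fac f a l = L i.
    move=> a; case: (Hreps a) => r rin Hr.
    have hi : index r reps < n by rewrite index_mem.
    exists (Ordinal hi); by rewrite /L /= nth_index.
  pose pick a := proj1_sig (constructive_indefinite_description _ (Hex a)).
  have pickP : forall a, S_fac f a l = L (pick a).
    move=> a; exact: (proj2_sig (constructive_indefinite_description _ (Hex a))).
  pose A := {| Q := 'I_n; q0 := pick [::]; init_val := one;
               delta := fun q s => pick (rcons (nth [::] reps q) s);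
               wt := fun q s => g (Delta [:: s] (L q));
               rho := fun q => L q [::] |}.
  have Hst : forall a, L (@ext_delta _ _ A (pick [::]) a) = S_fac f a l.
    elim/last_ind => [|a s IH]; first by rewrite /= -pickP.
    rewrite ext_delta_rcons /= -pickP !S_fac_rcons -IH.
    done.
  have Hw : forall a s, @wstar _ _ op one A (pick [::]) (rcons a s) =
     op (@wstar _ _ op one A (pick [::]) a)
       (g (Delta [:: s] (L (@ext_delta _ _ A (pick [::]) a)))).
    by move=> a s; rewrite /wstar rev_rcons /= revK.
  have Hw0 : @wstar _ _ op one A (pick [::]) [::] = one by [].
  have Hmain : forall a c, l (a ++ c) =
      op (@wstar _ _ op one A (pick [::]) a) (S_fac f a l c).
    elim/last_ind => [|a s IH] c.
      by rewrite Hw0 (monoid_left_id Hmon).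
    rewrite Hw -cats1 -catA IH /= -(monoid_assoc Hmon).
    congr (op _ _).
    have := Hfac (Delta [:: s] (S_fac f a l)).
    move/(congr1 (fun h => h c)); rewrite /lscale /Delta /= => <-.
    rewrite Hst. congr (op _ _).
    by rewrite cats1 S_fac_rcons.
  exists A; apply: functional_extensionality => a.
  rewrite /mdfa_lang /= (monoid_left_id Hmon) Hst.
  by rewrite -[in RHS](cats0 a) Hmain.
Qed.
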